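(* Every almost reciprocal Puiseux monoid satisfies the ascending chain condition on principal ideals (ACCP).
   Context: A Puiseux monoid is an additive submonoid of $(\mathbb{Q}_{\ge 0},+)$. An almost reciprocal Puiseux monoid is a monoid of the form $\langle \frac{c_n}{d_n} \mid n \in \mathbb{N} \rangle$, where $(d_n)_{n\ge 1}$ is a strictly increasing sequence of positive integers whose terms are pairwise relatively prime, and $(c_n)_{n \ge 1}$ is a sequence of positive integers with $\gcd(c_n,d_n)=1$ for every $n$. A principal ideal of a monoid $M$ is a set $r + M = \{r+q \mid q \in M\}$ with $r \in M$; $M$ satisfies the ACCP if every ascending chain $r_1 + M \subseteq r_2 + M \subseteq \cdots$ of principal ideals is eventually constant. *)

(* Defs.v *)
From mathcomp Require Import all_boot all_order all_algebra.
Set Implicit Arguments. Unset Strict Implicit. Unset Printing Implicit Defensive.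
Import Order.TTheory GRing.Theory Num.Theory.
Local Open Scope ring_scope.

Definition gen_monoid (g : nat -> rat) : rat -> Prop :=
  fun q => exists s : seq nat, q = \sum_(i <- s) g i.

Definition in_pideal (M : rat -> Prop) (r x : rat) : Prop :=
  exists q, M q /\ x = r + q.

Definition ACCP (M : rat -> Prop) : Prop :=
  forall r : nat -> rat,
    (forall k, M (r k)) ->
    (forall k x, in_pideal M (r k) x -> in_pideal M (r k.+1) x) ->
    exists N, forall k, (N <= k)%N ->
      forall x, in_pideal M (r k) x <-> in_pideal M (r N) x.

Definition almost_reciprocal_data (c d : nat -> nat) : Prop :=
  [/\ (forall n, 0 < d n)%N,
      (forall m n, (m < n)%N -> (d m < d n)%N),
      (forall m n, m <> n -> coprime (d m) (d n)),
      (forall n, 0 < c n)%N &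
      (forall n, coprime (c n) (d n))].

Definition almost_reciprocal_PM (c d : nat -> nat) : rat -> Prop :=
  gen_monoid (fun n => (c n)%:R / (d n)%:R).

(* Main.v *)
Require Import Defs.
From mathcomp Require Import all_boot all_order all_algebra.
From mathcomp Require Import zify ring.
From Stdlib Require Import Classical.

Lemma ev_const (f : nat -> nat) : (forall k, f k.+1 <= f k) ->
  exists K, forall k, K <= k -> f k = f K.
Proof.
move=> hf.
have mono : forall i j, i <= j -> f j <= f i.
  move=> i j /subnK <-; elim: (j - i) => [|m IH] //=.
  by rewrite addSn (leq_trans (hf _) IH).
apply: NNPP => hne.
have H : forall j, exists K, f K + j <= f 0.
  elim=> [|j [K hK]]; first by exists 0; rewrite addn0.
  have [k [hk hk']] : exists k, K <= k /\ f k <> f K.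
    apply: NNPP => h2; apply: hne; exists K => k hk; apply: NNPP => h3.
    by apply: h2; exists k.
  exists k; have := mono _ _ hk; lia.
have [K hK] := H (f 0).+1; lia.
Qed.
Set Implicit Arguments. Unset Strict Implicit. Unset Printing Implicit Defensive.
Import Order.TTheory GRing.Theory Num.Theory.
Local Open Scope ring_scope.

Lemma mod_cancel (d x y K : nat) : coprime d K ->
  (x * K = y * K %[mod d])%N -> (x = y %[mod d])%N.
Proof.
move=> cK.
wlog le: x y / (y <= x)%N.
  move=> H; case: (leqP y x) => h; first exact: H.
  move=> e; apply/esym/H; [exact: ltnW | exact/esym].
move/eqP; rewrite eqn_mod_dvd; last by rewrite leq_mul2r le orbT.
by rewrite -mulnBl Gauss_dvdl // -eqn_mod_dvd // => /eqP.
Qed.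

Lemma coprime_prod_excl (d : nat -> nat) n B :
  (forall m n, m <> n -> coprime (d m) (d n)) ->
  coprime (d n) (\prod_(0 <= j < B | j != n) d j).
Proof.
move=> hcop; apply: (big_ind (fun x => coprime (d n) x)).
- exact: coprimen1.
- by move=> a b ha hb; rewrite coprimeMr ha hb.
- by move=> j /eqP hj; apply: hcop => e; apply: hj; rewrite e.
Qed.

Lemma dvd_prod_excl (d : nat -> nat) n m B :
  (n < B)%N -> m != n -> (d n %| \prod_(0 <= j < B | j != m) d j)%N.
Proof.
move=> hn hm; rewrite (big_rem n) /=; last by rewrite mem_index_iota.
by rewrite eq_sym hm dvdn_mulr.
Qed.


Lemma sum_count (s : seq nat) (B : nat) (F : nat -> rat) :
  (forall i, i \in s -> (i < B)%N) ->
  \sum_(i <- s) F i = \sum_(0 <= n < B) (count_mem n s)%:R * F n.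
Proof.
elim: s => [|a s IH] hB.
  by rewrite big_nil big1 // => n _; rewrite mul0r.
rewrite big_cons IH; last by move=> i hi; apply: hB; rewrite inE hi orbT.
have haB : (a < B)%N by apply: hB; rewrite inE eqxx.
rewrite [RHS](eq_bigr (fun n => (a == n)%:R * F n + (count_mem n s)%:R * F n)); last first.
  by move=> n _ /=; rewrite natrD mulrDl.
rewrite big_split /=; congr (_ + _).
rewrite (eq_bigr (fun n => if n == a then F n else 0)); last first.
  by move=> n _; rewrite eq_sym; case: eqP => _; rewrite ?mul1r ?mul0r.
by rewrite -big_mkcond big_nat1_eq /= haB.
Qed.

Definition bnd (s : seq nat) : nat := foldr (fun i m => maxn i.+1 m) 0%N s.

Lemma bndP s i : i \in s -> (i < bnd s)%N.
Proof.
elim: s => [|a s IH] //=; rewrite inE => /orP [/eqP -> | /IH h].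
  by rewrite leq_maxl.
by rewrite (leq_trans h) // leq_maxr.
Qed.

Lemma sum_nat_scaled (c d : nat -> nat) (x : nat -> nat) B :
  (forall n, (0 < d n)%N) ->
  (\sum_(0 <= m < B) (x m)%:R * ((c m)%:R / (d m)%:R)) * (\prod_(0 <= j < B) d j)%:R
  = (\sum_(0 <= m < B) x m * c m * \prod_(0 <= j < B | j != m) d j)%:R :> rat.
Proof.
move=> hd; rewrite mulr_suml natr_sum; apply: eq_big_seq => m hm.
rewrite (bigD1_seq m) //=; last exact: iota_uniq.
have hd0 : (d m)%:R != 0 :> rat by rewrite pnatr_eq0 -lt0n hd.
rewrite !natrM; field.
exact: hd0.
Qed.

Lemma cong (c d : nat -> nat) s1 s2 :
  (forall n, (0 < d n)%N) ->
  (forall m n, m <> n -> coprime (d m) (d n)) ->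
  (forall n, coprime (c n) (d n)) ->
  \sum_(i <- s1) ((c i)%:R / (d i)%:R) = \sum_(i <- s2) ((c i)%:R / (d i)%:R) :> rat ->
  forall n, (count_mem n s1 = count_mem n s2 %[mod d n])%N.
Proof.
move=> hd hcop hcd e n.
pose B := maxn n.+1 (maxn (bnd s1) (bnd s2)).
have hB1 : forall i, i \in s1 -> (i < B)%N.
  by move=> i /bndP h; rewrite (leq_trans h) // /B maxnCA leq_maxl.
have hB2 : forall i, i \in s2 -> (i < B)%N.
  by move=> i /bndP h; rewrite (leq_trans h) // /B maxnA leq_maxr.
have hnB : (n < B)%N by rewrite /B leq_maxl.
move: e; rewrite (sum_count _ hB1) (sum_count _ hB2) => e.
have := congr1 (fun z => z * (\prod_(0 <= j < B) d j)%:R) e.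
rewrite /= !sum_nat_scaled // => /eqP; rewrite eqr_nat => /eqP e2.
have split_mod : forall s, ((\sum_(0 <= m < B) count_mem m s * c m * \prod_(0 <= j < B | j != m) d j) = 
   count_mem n s * (c n * \prod_(0 <= j < B | j != n) d j) %[mod d n])%N.
  move=> s; rewrite (bigD1_seq n) /=; [|by rewrite mem_index_iota|exact: iota_uniq].
  rewrite -modnDmr.
  have -> : ((\sum_(i <- index_iota 0 B | i != n) count_mem i s * c i * \prod_(0 <= j < B | j != i) d j) %% d n = 0)%N.
    apply/eqP; apply: dvdn_sum => i hi; apply: dvdn_mull.
    by apply: dvd_prod_excl; rewrite // eq_sym.
  by rewrite addn0 mulnA.
apply: (@mod_cancel _ _ _ (c n * \prod_(0 <= j < B | j != n) d j)).
  by rewrite coprimeMr coprime_sym hcd coprime_prod_excl.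
by rewrite -!split_mod e2.
Qed.

Lemma sum0_term (B : nat) (F : nat -> nat) i :
  (i < B)%N -> (\sum_(0 <= n < B) F n = 0)%N -> F i = 0%N.
Proof.
move=> hi; rewrite (bigD1_seq i) /=; [|by rewrite mem_index_iota|exact: iota_uniq].
by move/eqP; rewrite addn_eq0 => /andP [/eqP -> _].
Qed.

Lemma sum_ext (s : seq nat) B B' (f : nat -> nat -> nat) :
  (forall i, i \in s -> (i < B)%N) -> (B <= B')%N -> (forall n, f n 0%N = 0%N) ->
  (\sum_(0 <= n < B') f n (count_mem n s) = \sum_(0 <= n < B) f n (count_mem n s))%N.
Proof.
move=> hs hBB hf; rewrite (big_cat_nat (n:=B)) //= [X in (_ + X)%N]big1_seq ?addn0 //.
move=> n /andP [_]; rewrite mem_index_iota => /andP [hn _].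
have /count_memPn -> : n \notin s.
  by apply/negP => /hs; rewrite ltnNge hn.
exact: hf.
Qed.

Section Main.
Variables (c d : nat -> nat).
Hypotheses (hd : forall n, (0 < d n)%N)
  (hcop : forall m n, m <> n -> coprime (d m) (d n))
  (hc : forall n, (0 < c n)%N)
  (hcd : forall n, coprime (c n) (d n)).

Let g n : rat := (c n)%:R / (d n)%:R.
Let V (s : seq nat) : rat := \sum_(i <- s) g i.
Definition Nv (s : seq nat) B := (\sum_(0 <= n < B) (count_mem n s %/ d n) * c n)%N.
Definition Pv (s : seq nat) B := (\sum_(0 <= n < B) (count_mem n s %% d n))%N.
Let W (s : seq nat) B : rat := \sum_(0 <= n < B) (count_mem n s %% d n)%:R * g n.

Lemma decomp s B : (forall i, i \in s -> (i < B)%N) -> V s = (Nv s B)%:R + W s B.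
Proof.
move=> hs; rewrite /V (sum_count _ hs) /Nv /W natr_sum -big_split /=.
apply: eq_bigr => n _.
rewrite {1}(divn_eq (count_mem n s) (d n)) natrD mulrDl /g.
have hd0 : (d n)%:R != 0 :> rat by rewrite pnatr_eq0 -lt0n hd.
by congr (_ + _); rewrite !natrM -mulrA (mulrCA (d n)%:R) mulfV // mulr1.
Qed.

Lemma step s s' t B :
  V s = V s' + V t ->
  (forall i, i \in s -> (i < B)%N) ->
  (forall i, i \in s' -> (i < B)%N) ->
  (forall i, i \in t -> (i < B)%N) ->
  (Nv s' B <= Nv s B)%N /\
  (Nv s' B = Nv s B -> (Pv s' B <= Pv s B)%N /\ (Pv s' B = Pv s B -> t = [::])).
Proof.
move=> e hs hs' ht.
have hcg : forall n, (count_mem n s = count_mem n s' + count_mem n t %[mod d n])%N.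
  move=> n; rewrite -count_cat; apply: (cong hd hcop hcd).
  by rewrite big_cat.
pose E := (\sum_(0 <= n < B) ((count_mem n s' %% d n + count_mem n t) %/ d n) * c n)%N.
have hdiv : forall n, (count_mem n s' %% d n + count_mem n t =
    ((count_mem n s' %% d n + count_mem n t) %/ d n) * d n + count_mem n s %% d n)%N.
  move=> n; rewrite {1}(divn_eq (count_mem n s' %% d n + count_mem n t) (d n)).
  by rewrite modnDml -hcg.
have hNE : Nv s B = (Nv s' B + E)%N.
  apply/eqP; rewrite -(eqr_nat rat) natrD; apply/eqP.
  have : V s' + V t = (Nv s' B)%:R + E%:R + W s B.
    rewrite (decomp hs') /V (sum_count _ ht) /W -!addrA; congr (_ + _).
    rewrite /E natr_sum -!big_split /=; apply: eq_bigr => n _.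
    rewrite -mulrDl -natrD [in LHS]hdiv natrD mulrDl /g.
    have hd0 : (d n)%:R != 0 :> rat by rewrite pnatr_eq0 -lt0n hd.
    by congr (_ + _); rewrite !natrM -mulrA (mulrCA (d n)%:R) mulfV // mulr1.
  rewrite -e (decomp hs); exact: addIr.
split; first by rewrite hNE leq_addr.
move=> heq; move: hNE; rewrite -heq -{1}[Nv s' B]addn0 => /eqP; rewrite eqn_add2l eq_sym => /eqP E0.
have hz : forall n, (n < B)%N -> (count_mem n s' %% d n + count_mem n t = count_mem n s %% d n)%N.
  move=> n hn; rewrite hdiv.
  have := sum0_term hn E0; move/eqP; rewrite muln_eq0 => /orP [/eqP -> //|].
  by rewrite eqn0Ngt hc.
have hPv : (Pv s B = Pv s' B + \sum_(0 <= n < B) count_mem n t)%N.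
  rewrite /Pv -big_split /=; apply: eq_big_seq => n; rewrite mem_index_iota => /andP [_ hn].
  by rewrite hz.
split; first by rewrite hPv leq_addr.
move=> hP; move: hPv; rewrite -hP -{1}[Pv s' B]addn0 => /eqP; rewrite eqn_add2l eq_sym => /eqP T0.
clear E0 hz hdiv; move: T0; rewrite /E; clear E; case: t ht {e hcg} => [//|a t] ht T0.
have ha : (a < B)%N by apply: ht; rewrite inE eqxx.
have := sum0_term ha T0; rewrite /= eqxx.
by [].
Qed.

End Main.

Local Close Scope ring_scope.

Theorem theorem4p5 (c d : nat -> nat) :
  almost_reciprocal_data c d -> ACCP (almost_reciprocal_PM c d).
Proof.
move=> [hd hmono hcop hc hcd] r hr hch.
pose g n : rat := ((c n)%:R / (d n)%:R)%R.
have ex1 : forall k, exists s : seq nat, r k == (\sum_(i <- s) g i)%R.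
  by move=> k; case: (hr k) => s ->; exists s.
have ex2 : forall k, exists s : seq nat, r k == (r k.+1 + \sum_(i <- s) g i)%R.
  move=> k; have := hch k (r k).
  case.
    by exists 0%R; split; [exists [::]; rewrite big_nil | rewrite GRing.addr0].
  move=> q [[s ->] ->]; by exists s.
pose S k := xchoose (ex1 k).
pose T k := xchoose (ex2 k).
have hS : forall k, r k = (\sum_(i <- S k) g i)%R by move=> k; apply/eqP; exact: (xchooseP (ex1 k)).
have hT : forall k, r k = (r k.+1 + \sum_(i <- T k) g i)%R by move=> k; apply/eqP; exact: (xchooseP (ex2 k)).
pose Nk k := Nv c d (S k) (bnd (S k)).
pose Pk k := Pv d (S k) (bnd (S k)).
have hstep : forall k, Nk k.+1 <= Nk k /\
   (Nk k.+1 = Nk k -> Pk k.+1 <= Pk k /\ (Pk k.+1 = Pk k -> r k.+1 = r k)).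
  move=> k.
  pose B := maxn (bnd (S k)) (maxn (bnd (S k.+1)) (bnd (T k))).
  have h1 : forall i, i \in S k -> i < B.
    by move=> i /bndP h; rewrite (leq_trans h) // /B leq_maxl.
  have h2 : forall i, i \in S k.+1 -> i < B.
    by move=> i /bndP h; rewrite (leq_trans h) // /B maxnCA leq_maxl.
  have h3 : forall i, i \in T k -> i < B.
    by move=> i /bndP h; rewrite (leq_trans h) // /B maxnA leq_maxr.
  have e : (\sum_(i <- S k) g i = \sum_(i <- S k.+1) g i + \sum_(i <- T k) g i)%R.
    by rewrite -!hS -hT.
  have := step hd hcop hc hcd e h1 h2 h3.
  have bB1 : bnd (S k) <= B by rewrite leq_maxl.
  have bB2 : bnd (S k.+1) <= B by rewrite /B maxnCA leq_maxl.
  have f1 : forall n, 0 %/ d n * c n = 0 by move=> n; rewrite div0n.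
  have f2 : forall n, 0 %% d n = 0 by move=> n; rewrite mod0n.
  rewrite /Nk /Pk /Nv /Pv.
  rewrite (sum_ext (f:=fun n x => x %/ d n * c n) (@bndP (S k)) bB1 f1).
  rewrite (sum_ext (f:=fun n x => x %/ d n * c n) (@bndP (S k.+1)) bB2 f1).
  rewrite (sum_ext (f:=fun n x => x %% d n) (@bndP (S k)) bB1 f2).
  rewrite (sum_ext (f:=fun n x => x %% d n) (@bndP (S k.+1)) bB2 f2).
  move=> [hA hB]; split => // hN; have [hC hD] := hB hN; split => // hP.
  by rewrite (hT k) (hD hP) big_nil GRing.addr0.
have hN1 : forall j, Nk j.+1 <= Nk j by move=> j; case: (hstep j).
have [K1 hK1] := @ev_const Nk hN1.
have hP2 : forall j, Pk (K1 + j.+1) <= Pk (K1 + j).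
  move=> j; rewrite addnS; have [_ h] := hstep (K1 + j).
  have hNeq : Nk (K1 + j).+1 = Nk (K1 + j) by rewrite -addnS !hK1 // leq_addr.
  by case: (h hNeq).
have [K2 hK2] := @ev_const (fun j => Pk (K1 + j)) hP2.
have hrK : forall j, r (K1 + K2 + j) = r (K1 + K2).
  elim=> [|j IH]; first by rewrite addn0.
  rewrite addnS -IH; have [_ h] := hstep (K1 + K2 + j).
  have hNeq : Nk (K1 + K2 + j).+1 = Nk (K1 + K2 + j).
    rewrite (hK1 (K1 + K2 + j).+1) ?(hK1 (K1 + K2 + j)) //. all: try lia.
  have [_ h'] := h hNeq; apply: h'.
  rewrite -!addnA -addnS (hK2 (K2 + j).+1) ?(hK2 (K2 + j)) ?leq_addr //.
  by rewrite ltnW // ltnS leq_addr.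
exists (K1 + K2) => k hk x.
by rewrite -(subnKC hk) hrK.
Qed.
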